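(* Let $g_1, g_2\in G(\Gamma)$ be strongly non-split. Then there exists a linear order on $V(\Gamma)$ together with vertices $v_1\in\operatorname{supp}(g_1)$ and $v_2\in\operatorname{supp}(g_2)$ such that both the $v_1$-conical conjugate of $g_1$ and the $v_2$-conical conjugate of $g_2$ are strongly non-split and SD-conical.
   Context: $\Gamma$ is a finite simple graph and $G(\Gamma)=\langle v\in V(\Gamma)\mid [v_i,v_j]=1 \text{ if } \{v_i,v_j\}\notin E(\Gamma)\rangle$, i.e. the right-angled Artin group on the complement graph $\Gamma^c$ (generators joined by an edge of $\Gamma$ do not commute). $|g|$ is word length and $\operatorname{supp}(g)$ is the set of generators appearing in a reduced word for $g$. A decomposition $g=g_1\cdots g_k$ is geodesic if $|g|=|g_1|+\cdots+|g_k|$. $g$ is cyclically reduced if it has minimal word length in its conjugacy class. $g$ is non-split if $\operatorname{supp}(g)$ spans a connected subgraph of $\Gamma$; it is strongly non-split if it is non-split and no generator $v$ disjointly commutes with $g$ (i.e. there is no $v\notin\operatorname{supp}(g)$ commuting with every generator in $\operatorname{supp}(g)$). $S(g)$ is the set of generators $v$ such that $g=v^{\pm1}h$ is geodesic for some $h$; $g$ is $v_0$-conical if $S(g)=\{v_0\}$, and then $v_0=\operatorname{apex}(g)$. Given a linear order on $V(\Gamma)$, a conical element $g$ is SD-conical if $\operatorname{apex}(g)$ does not commute with any generator smaller than it (i.e. $v<\operatorname{apex}(g)$ implies $\{v,\operatorname{apex}(g)\}\in E(\Gamma)$). For a non-split, cyclically reduced $g$ and $v_0\in\operatorname{supp}(g)$,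 the $v_0$-conical conjugate of $g$ is defined as follows: for a non-split $h$ and $v\in\operatorname{supp}(h)$ there is a unique geodesic decomposition $h=tp$ with $p$ $v$-conical and $v\notin\operatorname{supp}(t)$; starting from $g_0=g$, write $g_i=t_ip_i$ in this way (with $v=v_0$) and set $g_{i+1}=p_it_i$; for the smallest $k$ with $g_k$ $v_0$-conical (such $k\le|V(\Gamma)|-1$ exists), the $v_0$-conical conjugate is $g_k$. It is a conjugate of $g$ obtained by iterated cyclic conjugations, has the same support as $g$, and is again non-split and cyclically reduced. (In the lemma the $g_i$ are implicitly taken cyclically reduced so that conical conjugates are defined.) *)

(* Defs.v *)
(* Right-angled Artin group G(Gamma) on the complement graph:
   vertices = a finType T, edges of Gamma = a rel e on T (hypotheses: symmetric,
   irreflexive).  Group elements are represented by words; equality in the group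
   is the equivalence [weq] generated by the defining relations. *)
From mathcomp Require Import all_boot.
From Stdlib Require Import Relations.Relation_Operators.

Set Implicit Arguments.
Unset Strict Implicit.
Unset Printing Implicit Defensive.

Section RAAG.
Variables (T : finType) (e : rel T).

(* a letter (v, b): b = true is v, b = false is v^-1 *)
Definition word := seq (T * bool).

Definition winv (w : word) : word := rev (map (fun x => (x.1, ~~ x.2)) w).

(* elementary moves of the presentation
   < V | [v_i, v_j] = 1 if {v_i, v_j} is not an edge of Gamma > *)
Inductive step : word -> word -> Prop :=
| step_cancel u v a b : step (u ++ [:: (a, b); (a, ~~ b)] ++ v) (u ++ v)
| step_comm u v x y : ~~ e x.1 y.1 -> step (u ++ [:: x; y] ++ v) (u ++ [:: y; x] ++ v).

Definition weq : word -> word -> Prop := clos_refl_sym_trans word step.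

Definition len_of (w : word) (n : nat) : Prop :=
  (exists w', weq w w' /\ size w' = n) /\ (forall w', weq w w' -> n <= size w').

Definition reduced (w : word) : Prop := forall w', weq w w' -> size w <= size w'.

Definition in_supp (g : word) (v : T) : Prop :=
  exists w, weq g w /\ reduced w /\ v \in map fst w.

Definition gdec (g t p : word) : Prop :=
  weq g (t ++ p) /\
  exists nt np, len_of t nt /\ len_of p np /\ len_of g (nt + np).

Definition cyc_red (g : word) : Prop :=
  forall c n m, len_of g n -> len_of (winv c ++ g ++ c) m -> n <= m.

Definition connected_in (P : T -> Prop) : Prop :=
  (exists x, P x) /\
  forall x y, P x -> P y ->
    exists p : seq T, path e x p /\ last x p = y /\ (forall z, z \in p -> P z).

Definition non_split (g : word) : Prop := connected_in (in_supp g).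

Definition disj_comm (v : T) (g : word) : Prop :=
  ~ in_supp g v /\ forall u, in_supp g u -> ~~ e v u.

Definition strongly_non_split (g : word) : Prop :=
  non_split g /\ ~ (exists v, disj_comm v g).

Definition in_S (g : word) (v : T) : Prop :=
  exists b h, gdec g [:: (v, b)] h.

Definition conical (v0 : T) (g : word) : Prop :=
  forall v, in_S g v <-> v = v0.

(* SD-conical w.r.t. the linear order on T given by an injective rank r *)
Definition SD_conical (r : T -> nat) (g : word) : Prop :=
  exists a, conical a g /\ forall v, r v < r a -> e v a.

Definition conical_conj (v0 : T) (g h : word) : Prop :=
  exists (k : nat) (gs : nat -> word),
    weq (gs 0) g /\
    (forall i, i < k ->
       ~ conical v0 (gs i) /\
       exists t p, gdec (gs i) t p /\ conical v0 p /\ ~ in_supp t v0 /\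
                   weq (gs i.+1) (p ++ t)) /\
    conical v0 (gs k) /\ weq h (gs k).

End RAAG.

(* Main.v *)
Require Import Defs.
From mathcomp Require Import all_boot.
From Stdlib Require Import Relations.Relation_Operators Classical Lia.
From mathcomp Require Import zify.

Set Implicit Arguments.
Unset Strict Implicit.
Unset Printing Implicit Defensive.

Section Raag.
Variables (T : finType) (e : rel T).
Hypothesis e_sym : symmetric e.
Hypothesis e_irr : irreflexive e.

Local Notation word := (word T).
Local Notation weq := (weq e).

Definition cm (a : T) (y : T * bool) := ~~ e a y.1.

Inductive sh : word -> word -> Prop :=
| sh_refl w : sh w w
| sh_swap u v x y : ~~ e x.1 y.1 -> sh (u ++ x :: y :: v) (u ++ y :: x :: v)
| sh_trans a b c : sh a b -> sh b c -> sh a c.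

Lemma sh_sym a b : sh a b -> sh b a.
Proof.
elim=> [w|u v x y H|a0 b0 c0 _ H1 _ H2].
- exact: sh_refl.
- apply: sh_swap; by rewrite e_sym.
- exact: sh_trans H2 H1.
Qed.

Lemma sh_catl c a b : sh a b -> sh (c ++ a) (c ++ b).
Proof.
elim=> [w|u v x y H|a0 b0 c0 _ H1 _ H2].
- exact: sh_refl.
- by rewrite !catA; apply: sh_swap.
- exact: sh_trans H1 H2.
Qed.

Lemma sh_catr c a b : sh a b -> sh (a ++ c) (b ++ c).
Proof.
elim=> [w|u v x y H|a0 b0 c0 _ H1 _ H2].
- exact: sh_refl.
- by rewrite -!catA /=; apply: sh_swap.
- exact: sh_trans H1 H2.
Qed.

Lemma sh_cons x a b : sh a b -> sh (x :: a) (x :: b).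
Proof. exact: (sh_catl [:: x]). Qed.

Lemma sh_size a b : sh a b -> size a = size b.
Proof. elim=> // [u v x y _|]; [by rewrite !size_cat | congruence]. Qed.

Lemma sh_perm a b : sh a b -> perm_eq a b.
Proof.
elim=> // [u v x y _|a0 b0 c0 _ H1 _ H2].
- rewrite perm_cat2l -[x :: y :: v]/([:: x; y] ++ v) -[y :: x :: v]/([:: y; x] ++ v).
  rewrite perm_cat2r; apply/permP=> P /=; by rewrite addnCA.
- exact: perm_trans H1 H2.
Qed.

Lemma sh_move x m r : all (cm x.1) m -> sh (x :: m ++ r) (m ++ x :: r).
Proof.
elim: m => [|y m IH] /=; first by move=> _; exact: sh_refl.
case/andP=> Hy Hm.
apply: sh_trans (sh_swap [::] (m ++ r) Hy) _ => /=.
exact: sh_cons (IH Hm).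
Qed.

Lemma sh_weq a b : sh a b -> weq a b.
Proof.
elim=> [w|u v x y H|a0 b0 c0 _ H1 _ H2].
- exact: rst_refl.
- apply: rst_step; exact: (@step_comm T e u v x y H).
- exact: rst_trans H1 H2.
Qed.

Lemma step_catl c a b : step e a b -> step e (c ++ a) (c ++ b).
Proof.
case=> [u v a0 b0|u v x y H].
- have H := step_cancel e (c ++ u) v a0 b0; rewrite -!catA in H; exact H.
- have H' := @step_comm T e (c ++ u) v x y H; rewrite -!catA in H'; exact H'.
Qed.

Lemma step_catr c a b : step e a b -> step e (a ++ c) (b ++ c).
Proof.
case=> [u v a0 b0|u v x y H]; rewrite -!catA.
- exact: (step_cancel e u (v ++ c) a0 b0).
- exact: (@step_comm T e u (v ++ c) x y H).
Qed.

Lemma weq_catl c a b : weq a b -> weq (c ++ a) (c ++ b).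
Proof.
elim=> [x y H|x|x y _ H|x y z _ H1 _ H2].
- apply: rst_step; exact: step_catl.
- exact: rst_refl.
- exact: rst_sym.
- exact: rst_trans H1 H2.
Qed.

Lemma weq_catr c a b : weq a b -> weq (a ++ c) (b ++ c).
Proof.
elim=> [x y H|x|x y _ H|x y z _ H1 _ H2].
- apply: rst_step; exact: step_catr.
- exact: rst_refl.
- exact: rst_sym.
- exact: rst_trans H1 H2.
Qed.

Lemma weq_cat a b c d : weq a b -> weq c d -> weq (a ++ c) (b ++ d).
Proof. move=> H1 H2; apply: rst_trans (weq_catr c H1) (weq_catl b H2). Qed.

Lemma weq_sym a b : weq a b -> weq b a.
Proof. exact: rst_sym. Qed.

Lemma weq_trans a b c : weq a b -> weq b c -> weq a c.
Proof. exact: rst_trans. Qed.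

Lemma weq_refl a : weq a a.
Proof. exact: rst_refl. Qed.

Lemma split_eq (u u' r r' : word) x y :
  u ++ x :: r = u' ++ y :: r' ->
  (u = u' /\ x = y /\ r = r') \/
  (exists s, u' = u ++ x :: s /\ r = s ++ y :: r') \/
  (exists s, u = u' ++ y :: s /\ r' = s ++ x :: r).
Proof.
elim: u u' => [|z u IH] [|z' u'] /=.
- by case=> -> ->; left.
- case=> -> ->; right; left; by exists u'.
- case=> -> <-; right; right; by exists u.
- case=> -> /IH [[-> [-> ->]]|[[s [-> ->]]|[s [-> ->]]]].
  + by left.
  + right; left; by exists s.
  + right; right; by exists s.
Qed.

Definition red1 (w w' : word) : Prop :=
  exists u m v a b, all (cm a) m /\
    w = u ++ (a, b) :: m ++ (a, ~~ b) :: v /\ w' = u ++ m ++ v.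

Lemma red1I u m v a b : all (cm a) m ->
  red1 (u ++ (a, b) :: m ++ (a, ~~ b) :: v) (u ++ m ++ v).
Proof. by move=> H; exists u, m, v, a, b. Qed.

Lemma red1_size w w' : red1 w w' -> size w = (size w').+2.
Proof.
case=> [u [m [v [a [b [_ [-> ->]]]]]]].
by rewrite !size_cat /= size_cat /= !addnS.
Qed.

Lemma red1_weq w w' : red1 w w' -> weq w w'.
Proof.
case=> [u [m [v [a [b [H [-> ->]]]]]]].
apply: weq_catl.
apply: (weq_trans (sh_weq (@sh_move (a, b) m ((a, ~~ b) :: v) H))).
apply: weq_catl; apply: rst_step.
exact: (step_cancel e [::] v a b).
Qed.


Ltac nrm := rewrite -?catA /= ?negbK -?catA /=.

Lemma all_cmE a s t x : all (cm a) (s ++ x :: t) = [&& cm a x, all (cm a) s & all (cm a) t].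
Proof. by rewrite all_cat /=; case: (cm a x); case: (all _ s); case: (all _ t). Qed.

Lemma red1_swap u v x y w1 : ~~ e x.1 y.1 -> red1 (u ++ x :: y :: v) w1 ->
  exists w2, red1 (u ++ y :: x :: v) w2 /\ sh w1 w2.
Proof.
move=> H [p [m [q [a [b [Hm [E ->]]]]]]].
case/split_eq: E => [[Eu [Ex E]]|[[s [Ep E]]|[s [Eu E]]]].
- subst u x; case: m Hm E => [|z m'] Hm /= [Ey Ev]; subst y v.
  + exists (p ++ q); split; last exact: sh_refl.
    by exists p, [::], q, a, (~~ b); nrm.
  + exists (p ++ z :: m' ++ q); split; last exact: sh_refl.
    exists (p ++ [:: z]), m', q, a, b; move: Hm => /andP [_ Hm']; split=> //.
    by split; nrm.
- subst p; case: s E => [|z s'] /= [Ey Ev]; subst y v.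
  + exists (u ++ x :: m ++ q); split; last by nrm; exact: sh_refl.
    exists u, (x :: m), q, a, b; split; last by split; nrm.
    by rewrite /= Hm andbT /cm e_sym.
  + exists (u ++ z :: x :: s' ++ m ++ q); split.
    * by exists (u ++ z :: x :: s'), m, q, a, b; split=> //; split; nrm.
    * nrm; exact: sh_swap.
- subst u; case/split_eq: E => [[Em [Ex Eq]]|[[s0 [Es Eq]]|[s0 [Em E]]]].
  + subst s x q; exists (p ++ m ++ y :: v); split; last exact: sh_refl.
    exists p, (m ++ [:: y]), v, a, b; split; first by rewrite all_cat Hm /= andbT.
    by split; nrm.
  + subst s q; exists (p ++ m ++ s0 ++ y :: x :: v); split.
    * by exists p, m, (s0 ++ y :: x :: v), a, b; split=> //; split; nrm.
    * rewrite !catA; apply: sh_swap.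
      done.
  + subst m; case: s0 E Hm => [|z s1] /= [Ey Ev] Hm; subst y v.
    * exists (p ++ s ++ x :: q); split; last by nrm; exact: sh_refl.
      exists p, s, (x :: q), a, b; split; last by split; nrm.
      by move: Hm; rewrite all_cat => /andP [].
    * exists (p ++ s ++ z :: x :: s1 ++ q); split.
      -- exists p, (s ++ z :: x :: s1), q, a, b; split; last by split; nrm.
         by move: Hm; rewrite !all_cmE /= => /and4P [-> -> -> ->].
      -- nrm; rewrite !catA; exact: sh_swap.
Qed.


Ltac allt := repeat match goal with
  | H : is_true (all _ (_ ++ _)) |- _ => rewrite all_cat in H
  | H : is_true (all _ (_ :: _)) |- _ => rewrite /= in H
  | H : is_true (_ && _) |- _ => case/andP: H => ? ?
  end; rewrite ?all_cat /= ?andbT; repeat (apply/andP; split); try assumption.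

Lemma red1_sh w w' w1 : sh w w' -> red1 w w1 -> exists w2, red1 w' w2 /\ sh w1 w2.
Proof.
move=> H; elim: H w1 => [w0|u v x y Hxy|a0 b0 c0 _ IH1 _ IH2] w1 R.
- by exists w1; split=> //; exact: sh_refl.
- exact: red1_swap Hxy R.
- case: (IH1 _ R) => w2 [R2 S2]; case: (IH2 _ R2) => w3 [R3 S3].
  by exists w3; split=> //; exact: sh_trans S2 S3.
Qed.

Definition joinable w1 w2 := sh w1 w2 \/ exists w3, red1 w1 w3 /\ red1 w2 w3.

Lemma joinable_sym w1 w2 : joinable w1 w2 -> joinable w2 w1.
Proof.
case=> [H|[w3 [H1 H2]]]; [left; exact: sh_sym | right; by exists w3].
Qed.

Lemma lc_lt u1 m1 v1 a b s c d m2 v2 : all (cm a) m1 -> all (cm c) m2 ->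
  m1 ++ (a, ~~ b) :: v1 = s ++ (c, d) :: m2 ++ (c, ~~ d) :: v2 ->
  joinable (u1 ++ m1 ++ v1) ((u1 ++ (a, b) :: s) ++ m2 ++ v2).
Proof.
move=> Hm1 Hm2.
case/split_eq => [[Em [Ex Ev]]|[[s' [Es Ev]]|[s'' [Em E]]]].
- case: Ex => Ec Ed; subst s v1 c d; left; apply: sh_sym; nrm.
  apply: sh_catl; move: (@sh_move (a, b) (m1 ++ m2) v2); rewrite -?catA; apply; by allt.
- subst s v1; right; exists (u1 ++ m1 ++ s' ++ m2 ++ v2); split.
  + by exists (u1 ++ m1 ++ s'), m2, v2, c, d; split=> //; split; nrm.
  + by exists u1, m1, (s' ++ m2 ++ v2), a, b; split=> //; split; nrm.
- subst m1; case/split_eq: E => [[Em [Ex Ev]]|[[s3 [Es Ev]]|[s4 [Em Ev]]]].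
  + case: Ex => Ec /negb_inj Ed; subst s'' c d v2; left; nrm.
    apply: sh_catl; apply: sh_sym; move: (@sh_move (a, b) s (m2 ++ v1)); rewrite -?catA; apply; by allt.
  + subst s'' v2; right; exists (u1 ++ s ++ m2 ++ s3 ++ v1); split.
    * by exists (u1 ++ s), m2, (s3 ++ v1), c, d; split=> //; split; nrm.
    * exists u1, (s ++ m2 ++ s3), v1, a, b; split; last by split; nrm.
      by allt.
  + subst m2 v1; right; exists (u1 ++ s ++ s'' ++ s4 ++ v2); split.
    * exists (u1 ++ s), (s'' ++ s4), v2, c, d; split; last by split; nrm.
      by allt.
    * exists u1, (s ++ s''), (s4 ++ v2), a, b; split; last by split; nrm.
      by allt.
Qed.

Lemma red1_lc w w1 w2 : red1 w w1 -> red1 w w2 -> joinable w1 w2.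
Proof.
move=> [u1 [m1 [v1 [a [b [Hm1 [-> ->]]]]]]] [u2 [m2 [v2 [c [d [Hm2 [E ->]]]]]]].
case/split_eq: E => [[Eu [Ex E]]|[[s [Eu E]]|[s [Eu E]]]].
- case: Ex => Ec Ed; subst u2 c d.
  case/split_eq: E => [[Em [_ Ev]]|[[s [Em Ev]]|[s [Em Ev]]]].
  + subst; left; exact: sh_refl.
  + subst m2 v1; left; nrm; apply: sh_catl; apply: sh_catl.
    apply: sh_sym; move: (@sh_move (a, ~~ b) s v2); rewrite -?catA; apply; by allt.
  + subst m1 v2; left; nrm; apply: sh_catl; apply: sh_catl.
    move: (@sh_move (a, ~~ b) s v1); rewrite -?catA; apply; by allt.
- subst u2; exact: lc_lt Hm1 Hm2 E.
- subst u1; apply: joinable_sym; exact: lc_lt Hm2 Hm1 E.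
Qed.


Inductive rt : word -> word -> Prop :=
| rt0 w : rt w w
| rtS w w1 w2 : red1 w w1 -> rt w1 w2 -> rt w w2.

Definition irr (w : word) := forall w', ~ red1 w w'.
Definition nf_of w z := rt w z /\ irr z.

Lemma rt_size w z : rt w z -> size z <= size w.
Proof.
elim=> // w0 w1 w2 /red1_size H _ IH; rewrite H; lia.
Qed.


Lemma nf_exists w : exists z, nf_of w z.
Proof.
move: {2}(size w) (leqnn (size w)) => n; elim: n w => [|n IH] w Hn.
- exists w; split; first exact: rt0.
  by move=> w' /red1_size; move: Hn; case: w.
- case: (classic (exists w', red1 w w')) => [[w' R]|N].
  + have Hs := red1_size R.
    case: (IH w') => [|z [Rz Iz]]; first by lia.
    by exists z; split=> //; exact: rtS R Rz.
  + exists w; split; first exact: rt0.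
    by move=> w' R; apply: N; exists w'.
Qed.

Lemma irr_sh w w' : sh w w' -> irr w -> irr w'.
Proof.
move=> H Iw w1 R; case: (red1_sh (sh_sym H) R) => w2 [R2 _]; exact: Iw R2.
Qed.

Lemma rt_irr w z : irr w -> rt w z -> z = w.
Proof. by move=> Iw H; case: H Iw => // w0 w1 w2 R _ Iw; case: (Iw _ R). Qed.

Lemma nf_sh n : forall w w', size w <= n -> sh w w' ->
  forall z z', nf_of w z -> nf_of w' z' -> sh z z'.
Proof.
elim: n => [|n IH] w w' Hn H z z' [Rz Iz] [Rz' Iz'].
- have Iw : irr w by move=> w1 /red1_size; move: Hn; case: w {H Rz}.
  have Iw' := irr_sh H Iw.
  by rewrite (rt_irr Iw Rz) (rt_irr Iw' Rz').
- case: (classic (irr w)) => Iw.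
  + have Iw' := irr_sh H Iw.
    by rewrite (rt_irr Iw Rz) (rt_irr Iw' Rz').
  + have Iw' : ~ irr w' by move=> I'; apply: Iw; exact: irr_sh (sh_sym H) I'.
    case: Rz Iz Iw Hn H => [w0 Iz0 Iw|w0 w1 z0 R1 Rz1 Iz0 _ Hn H]; first by case: (Iw Iz0).
    case: Rz' Iz' Iw' H => [w0' Iz0' Iw'|w0' w1' z0' R1' Rz1' Iz0' _ H]; first by case: (Iw' Iz0').
    have S1 := red1_size R1; have S1' := red1_size R1'; have Ss := sh_size H.
    case: (red1_sh H R1) => w2 [R2 S2].
    case: (red1_lc R1' R2) => [S3|[w3 [R3 R4]]].
    * apply: (IH w1 w1') => //; first by lia.
      exact: sh_trans S2 (sh_sym S3).
    * case: (nf_exists w3) => z3 [Rz3 Iz3].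
      have A1 : sh z0 z3.
        apply: (IH w1 w2) => //; first by lia.
        by split=> //; exact: rtS R4 Rz3.
      have A2 : sh z0' z3.
        apply: (IH w1' w1') => //; first by lia.
        - exact: sh_refl.
        - by split=> //; exact: rtS R3 Rz3.
      exact: sh_trans A1 (sh_sym A2).
Qed.

Lemma nf_sh' w w' z z' : sh w w' -> nf_of w z -> nf_of w' z' -> sh z z'.
Proof. move=> H; exact: (@nf_sh (size w) w w' (leqnn _) H). Qed.

Lemma weq_nf w w' : weq w w' -> forall z z', nf_of w z -> nf_of w' z' -> sh z z'.
Proof.
elim=> [x y H|x|x y _ IH|x y z _ IH1 _ IH2].
- case: H => [u v a b|u v x0 y0 H] z z' Nz Nz'.
  + apply: (nf_sh' (sh_refl _) Nz); case: Nz' => R I; split=> //.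
    apply: rtS R; by exists u, [::], v, a, b.
  + apply: (nf_sh' _ Nz Nz'); exact: sh_swap.
- move=> z z'; exact: nf_sh' (sh_refl _).
- move=> z z' N1 N2; exact: sh_sym (IH _ _ N2 N1).
- move=> z1 z2 N1 N2; case: (nf_exists y) => zy Ny.
  exact: sh_trans (IH1 _ _ N1 Ny) (IH2 _ _ Ny N2).
Qed.

Lemma irr_nf w : irr w -> nf_of w w.
Proof. by move=> I; split=> //; exact: rt0. Qed.

Lemma weq_irr_sh w w' : weq w w' -> irr w -> irr w' -> sh w w'.
Proof. move=> H I I'; exact: weq_nf H _ _ (irr_nf I) (irr_nf I'). Qed.

Lemma rt_weq w z : rt w z -> weq w z.
Proof.
elim=> [w0|w0 w1 w2 R _ IH]; first exact: weq_refl.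
exact: weq_trans (red1_weq R) IH.
Qed.

Lemma reduced_irr w : reduced e w <-> irr w.
Proof.
split.
- move=> Hr w' R; have := Hr _ (red1_weq R); rewrite (red1_size R); lia.
- move=> I w' H; case: (nf_exists w') => z [Rz Iz].
  have S := weq_irr_sh (weq_trans H (rt_weq Rz)) I Iz.
  rewrite (sh_size S); exact: rt_size Rz.
Qed.

Lemma len_ofP w z : weq w z -> irr z -> len_of e w (size z).
Proof.
move=> H I; split; first by exists z.
move=> w' H'; apply: ((reduced_irr z).2 I); exact: weq_trans (weq_sym H) H'.
Qed.

Lemma len_of_uniq w n m : len_of e w n -> len_of e w m -> n = m.
Proof.
move=> [[w1 [H1 S1]] L1] [[w2 [H2 S2]] L2].
have := L1 _ H2; have := L2 _ H1; lia.
Qed.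

Lemma len_of_irr w z n : weq w z -> irr z -> len_of e w n -> n = size z.
Proof. move=> H I L; exact: len_of_uniq L (len_ofP H I). Qed.

Lemma len_exists w : exists z, weq w z /\ irr z /\ len_of e w (size z).
Proof.
case: (nf_exists w) => z [Rz Iz]; exists z; split; first exact: rt_weq.
by split=> //; apply: len_ofP => //; exact: rt_weq.
Qed.

Lemma len_weq a b n : weq a b -> len_of e a n -> len_of e b n.
Proof.
move=> H [[w [H1 S1]] L]; split.
- exists w; split=> //; exact: weq_trans (weq_sym H) H1.
- move=> w' H'; apply: L; exact: weq_trans H H'.
Qed.

Lemma in_suppP g z v : weq g z -> irr z -> (in_supp e g v <-> v \in map fst z).
Proof.
move=> H I; split.
- case=> w [Hw [Rw Vw]].
  have S := weq_irr_sh (weq_trans (weq_sym Hw) H) ((reduced_irr w).1 Rw) I.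
  by rewrite -(perm_mem (perm_map fst (sh_perm S))).
- move=> V; exists z; split=> //; split=> //; exact/(reduced_irr z).2.
Qed.

Lemma in_supp_weq a b v : weq a b -> in_supp e a v -> in_supp e b v.
Proof.
move=> H [w [Hw R]]; exists w; split=> //; exact: weq_trans (weq_sym H) Hw.
Qed.

Lemma irr_catl u v : irr (u ++ v) -> irr u.
Proof.
move=> I u' [p [m [q [a [b [Hm [E1 E2]]]]]]]; apply: (I (u' ++ v)).
exists p, m, (q ++ v), a, b; split=> //; by subst; split; nrm.
Qed.

Lemma irr_catr u v : irr (u ++ v) -> irr v.
Proof.
move=> I v' [p [m [q [a [b [Hm [E1 E2]]]]]]]; apply: (I (u ++ v')).
exists (u ++ p), m, q, a, b; split=> //; by subst; split; nrm.
Qed.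


Fixpoint front (w : word) : seq T :=
  if w is x :: w' then x.1 :: [seq y <- front w' | ~~ e x.1 y] else [::].

Lemma front_cons x s u : (u \in front (x :: s)) = (u == x.1) || ((u \in front s) && ~~ e x.1 u).
Proof. by rewrite /= in_cons mem_filter andbC. Qed.

Lemma front_catl p s s' : (forall u, (u \in front s) = (u \in front s')) ->
  forall u, (u \in front (p ++ s)) = (u \in front (p ++ s')).
Proof.
move=> H; elim: p => [|x p IH] u //=.
by rewrite !in_cons !mem_filter IH.
Qed.

Lemma front_sh w w' : sh w w' -> forall u, (u \in front w) = (u \in front w').
Proof.
elim=> [w0|p v x y Hxy|a b c _ H1 _ H2] u //; last by rewrite H1 H2.
apply: front_catl => {}u; rewrite !front_cons.
case: (u =P x.1) => [->|Nx]; case: (u =P y.1) => [Ey|Ny] /=.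
- by rewrite e_sym Hxy orbT.
- by rewrite e_sym Hxy orbT.
- by subst u; rewrite Hxy.
- by rewrite andbAC.
Qed.

Lemma front_move u w : u \in front w -> exists b h, sh w ((u, b) :: h).
Proof.
elim: w => [|x w IH] //; rewrite front_cons; case/orP => [/eqP ->|/andP [Hu He]].
- exists x.2, w; case: x => ? ?; exact: sh_refl.
- case: (IH Hu) => b [h S]; exists b, (x :: h).
  apply: sh_trans (sh_cons x S) _.
  exact: (@sh_swap [::] h x (u, b) He).
Qed.

Lemma front_all q y : y \in map fst q -> (forall z, z \in map fst q -> ~~ e z y) ->
  y \in front q.
Proof.
elim: q => [|x q IH] //= Hy Hz; rewrite in_cons mem_filter.
case/orP: Hy => [->|Hy] //; rewrite IH //.
- by rewrite Hz ?orbT // in_cons eqxx.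
- by move=> z Hz'; apply: Hz; rewrite in_cons Hz' orbT.
Qed.

Lemma front_rcons q x y : y \in front (rcons q x) ->
  y \in front q \/ (y = x.1 /\ forall z, z \in map fst q -> ~~ e z y).
Proof.
elim: q => [|z q IH] /=; first by rewrite mem_seq1 => /eqP ->; right.
rewrite !in_cons !mem_filter; case/orP => [/eqP ->|/andP [He Hy]].
- by left; rewrite eqxx.
- case: (IH Hy) => [H|[Ey Hz]]; first by left; rewrite He H orbT.
  right; split=> // z0; rewrite in_cons; case/orP => [/eqP ->|]; first by [].
  exact: Hz.
Qed.

Lemma front_sub w u : u \in front w -> u \in map fst w.
Proof.
elim: w => [|x w IH] //=; rewrite !in_cons mem_filter.
by case/orP => [->|/andP [_ /IH ->]]; rewrite ?orbT.
Qed.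


Lemma irr_single x : irr [:: x].
Proof. by move=> w' /red1_size. Qed.

Lemma irr_of_len w z : weq w z -> irr z -> size w <= size z -> irr w.
Proof.
move=> H Iz Hs w' R.
have := (reduced_irr z).2 Iz w' (weq_trans (weq_sym H) (red1_weq R)).
rewrite (red1_size R) in Hs; lia.
Qed.

Lemma in_S_front w u : irr w -> (in_S e w u <-> u \in front w).
Proof.
move=> Iw; split.
- case=> b [h [Hw [nt [np [Lt [Lp Lg]]]]]].
  have Ent := len_of_irr (weq_refl _) (@irr_single (u, b)) Lt.
  case: (len_exists h) => h' [Hh [Ih Lh']].
  have Enp := len_of_uniq Lp Lh'.
  have Hz : weq w ((u, b) :: h') := weq_trans Hw (weq_catl [:: (u, b)] Hh).
  have Ew := len_of_uniq Lg (len_ofP (weq_refl w) Iw).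
  have Iz : irr ((u, b) :: h').
    apply: (irr_of_len (weq_sym Hz) Iw); rewrite -Ew Ent Enp; exact: leqnn.
  have S := weq_irr_sh Hz Iw Iz.
  by rewrite (front_sh S) front_cons eqxx.
- move=> /front_move [b [h S]].
  have Iz := irr_sh S Iw.
  have Ih : irr h := irr_catr (u := [:: (u, b)]) Iz.
  exists b, h; split; first exact: sh_weq S.
  exists 1, (size h); split; first exact: (@len_ofP [:: (u, b)] [:: (u, b)] (weq_refl _) (@irr_single (u, b))).
  split; first exact: len_ofP (weq_refl _) Ih.
  exact: (@len_ofP w ((u, b) :: h) (sh_weq S) Iz).
Qed.

Lemma conical_front w v : irr w -> (conical e v w <-> forall u, u \in front w <-> u = v).
Proof.
move=> Iw; split=> H u.
- by rewrite -in_S_front //; exact: H.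
- by rewrite in_S_front //; exact: H.
Qed.

Definition cb v w := (v \in front w) && all (fun u => u == v) (front w).

Lemma conical_cb w v : irr w -> (conical e v w <-> cb v w).
Proof.
move=> Iw; rewrite conical_front //; split.
- move=> H; apply/andP; split; first by apply/H.
  by apply/allP => u /H ->.
- case/andP => Hv /allP Ha u; split; first by move/Ha/eqP.
  by move=> ->.
Qed.

Definition inU v (q : word) (x : T * bool) :=
  (x.1 == v) || has (fun y => e y x.1 || (y == x.1)) (map fst q).

Fixpoint cone v (q : word) (w : word) : word * word :=
  match w with
  | [::] => ([::], [::])
  | x :: w' => if inU v q x then let r := cone v (rcons q x) w' in (r.1, x :: r.2)
               else let r := cone v q w' in (x :: r.1, r.2)
  end.

Lemma cone_sh v q w : sh (q ++ w) ((cone v q w).1 ++ q ++ (cone v q w).2).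
Proof.
elim: w q => [|x w IH] q /=; first by rewrite cats0; exact: sh_refl.
case: ifP => Hx /=.
- by rewrite -cat_rcons -[q ++ x :: _]cat_rcons; exact: IH.
- have Hall : all (cm x.1) q.
    apply/allP => y Hy; rewrite /cm e_sym.
    move/negbT: Hx; rewrite negb_or => /andP [_ /hasPn H].
    by have := H _ (map_f fst Hy); rewrite negb_or => /andP [].
  exact: sh_trans (sh_sym (@sh_move x q w Hall)) (sh_cons x (IH q)).
Qed.

Lemma cone_nov v q w : v \notin map fst (cone v q w).1.
Proof.
elim: w q => [|x w IH] q //=; case: ifP => Hx //=.
rewrite in_cons negb_or IH andbT; apply/negP => /eqP E.
by move: Hx; rewrite /inU -E eqxx.
Qed.

Lemma cone_front v q w : all (fun u => u == v) (front q) ->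
  all (fun u => u == v) (front (q ++ (cone v q w).2)).
Proof.
elim: w q => [|x w IH] q /=; first by rewrite cats0.
case: ifP => Hx /= Hq; last exact: IH.
rewrite -cat_rcons; apply: IH; apply/allP => y /front_rcons [Hy|[Ey Hz]].
- exact: (allP Hq).
- subst y; case/orP: Hx => [//|/hasP [y Hy /orP [He|/eqP Ey]]].
  + by have := Hz _ Hy; rewrite He.
  + subst y; apply: (allP Hq); exact: front_all.
Qed.

Lemma cone_p v q w : v \in map fst w -> 0 < size (cone v q w).2.
Proof.
elim: w q => [|x w IH] q //=; rewrite in_cons; case: ifP => Hx //= /orP [/eqP E|Hv].
- by move: Hx; rewrite /inU -E eqxx.
- exact: IH.
Qed.

Lemma cone_head v w x p : (cone v [::] w).2 = x :: p -> x.1 = v.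
Proof.
elim: w => [|y w IH] //=; rewrite /inU /=; case: ifP => Hy /=.
- by rewrite orbF in Hy; case=> <- _; apply/eqP.
- exact: IH.
Qed.

Lemma cone_idem v q w : cone v q (cone v q w).2 = ([::], (cone v q w).2).
Proof.
elim: w q => [|x w IH] q //=; case: ifP => Hx /=; last exact: IH.
by rewrite Hx IH.
Qed.

Lemma cone_cat v q a b : cone v q (a ++ b) =
  ((cone v q a).1 ++ (cone v (q ++ (cone v q a).2) b).1,
   (cone v q a).2 ++ (cone v (q ++ (cone v q a).2) b).2).
Proof.
elim: a q => [|x a IH] q /=; first by rewrite cats0; case: (cone v q b).
case: ifP => Hx /=; by rewrite IH // -?cat_rcons.
Qed.

Lemma cone_empty v q w : (cone v q w).2 = [::] -> all (fun x => ~~ inU v q x) w.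
Proof.
elim: w q => [|x w IH] q //=; case: ifP => Hx //= H.
by rewrite IH.
Qed.


Lemma winv_cat (a b : word) : winv (a ++ b) = winv b ++ winv a.
Proof. by rewrite /winv map_cat rev_cat. Qed.

Lemma winv_cancel t : weq (winv t ++ t) [::].
Proof.
elim: t => [|[a b] t IH]; first exact: weq_refl.
rewrite -[(a, b) :: t]/([:: (a, b)] ++ t) winv_cat -catA /=.
have H : weq (winv t ++ [:: (a, ~~ b); (a, ~~ ~~ b)] ++ t) (winv t ++ t).
  by apply: rst_step; exact: step_cancel.
rewrite negbK /= in H.
exact: weq_trans H IH.
Qed.

Lemma conj_step a t p : weq a (t ++ p) -> weq (p ++ t) (winv t ++ a ++ t).
Proof.
move=> H; apply: weq_sym.
apply: weq_trans (weq_catl (winv t) (weq_catr t H)) _.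
rewrite -catA catA -[X in weq _ X]cat0s.
apply: weq_catr; exact: winv_cancel.
Qed.

Lemma conj_irr g n w c : cyc_red e g -> len_of e g n ->
  weq w (winv c ++ g ++ c) -> size w <= n -> irr w /\ size w = n.
Proof.
move=> Cg Lg H Hs; case: (len_exists w) => z [Hz [Iz Lz]].
have Lc := len_weq H Lz.
have := Cg c n (size z) Lg Lc; have := Lz.2 w (weq_refl w) => H1 H2.
split; last by lia.
apply: (irr_of_len Hz Iz); lia.
Qed.

Lemma conj_trans g c w t p : weq w (winv c ++ g ++ c) -> weq w (t ++ p) ->
  weq (p ++ t) (winv (c ++ t) ++ g ++ (c ++ t)).
Proof.
move=> Hc Hd; apply: weq_trans (conj_step Hd) _.
rewrite winv_cat -!catA; apply: weq_catl.
move: (weq_catr t Hc); by rewrite -!catA.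
Qed.

Lemma path_cross (A : pred T) x s : path e x s -> A x -> ~~ A (last x s) ->
  exists a b, A a /\ ~~ A b /\ e a b /\ b \in s.
Proof.
elim: s x => [|y s IH] x /=; first by move=> _ ->.
case/andP => Hxy Hp Ax Hl; case Ay: (A y).
- case: (IH y Hp Ay Hl) => a [b [Aa [Ab [Hab Hb]]]].
  by exists a, b; rewrite in_cons Hb orbT.
- by exists x, y; rewrite Ay in_cons eqxx.
Qed.

Lemma cb_sh v w w' : sh w w' -> cb v w = cb v w'.
Proof.
move=> S; rewrite /cb (front_sh S v); congr andb.
by apply/allP/allP => H u Hu; apply: H; rewrite ?(front_sh S) // -(front_sh S).
Qed.

Lemma cone_cb v w : v \in map fst w -> (cone v [::] w).1 = [::] -> cb v w.
Proof.
move=> Hv Ht; have S := cone_sh v [::] w; rewrite Ht /= in S.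
rewrite (cb_sh v S) /cb.
have := cone_p [::] Hv; case E: (cone v [::] w).2 => [|x p] // _.
rewrite front_cons (cone_head E) eqxx /=.
by have := @cone_front v [::] w isT; rewrite /= E.
Qed.

Lemma grow v w : v \in map fst w ->
  (forall x y, x \in map fst w -> y \in map fst w -> exists s, path e x s /\
     last x s = y /\ (forall z, z \in s -> z \in map fst w)) ->
  ~~ cb v w ->
  size (cone v [::] w).2 < size (cone v [::] ((cone v [::] w).2 ++ (cone v [::] w).1)).2.
Proof.
move=> Hv Hc Ncb; rewrite cone_cat cone_idem /= size_cat -[X in X < _]addn0 ltn_add2l.
rewrite lt0n size_eq0; apply/negP => /eqP E.
have Emp := cone_empty E.
set t := (cone v [::] w).1 in Emp *; set p := (cone v [::] w).2 in Emp *.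
have S := cone_sh v [::] w; rewrite /= -/t -/p in S.
have Hmem u : (u \in map fst w) = (u \in map fst t) || (u \in map fst p).
  by rewrite (perm_mem (perm_map fst (sh_perm S))) map_cat mem_cat.
case Et: t => [|x t'].
- by move: Ncb; rewrite cone_cb.
- have Hx : x \in t by rewrite Et mem_head.
  have Hp : 0 < size p by exact: cone_p.
  case Ep: p Hp => [|y p'] // _.
  have Hy := cone_head Ep.
  have Hvp : v \in map fst p by rewrite Ep /= in_cons Hy eqxx.
  have Hx1 : x.1 \in map fst w by rewrite Hmem (map_f fst Hx).
  case: (Hc v x.1 Hv Hx1) => s [Ps [Ls Ss]].
  have Nx : x.1 \notin map fst p.
    have := allP Emp x Hx; rewrite /inU negb_or => /andP [_ /hasPn H].
    apply/negP => /H; by rewrite eqxx orbT.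
  have Hl : ~~ (fun u => u \in map fst p) (last v s) by rewrite Ls.
  case: (path_cross Ps Hvp Hl) => a [b [Aa [Ab [Hab Hb]]]].
  have Ab' : (b \in map fst p) = false by exact: (negbTE Ab).
  have Aa' : a \in map fst p by exact: Aa.
  have := Ss _ Hb; rewrite Hmem Ab' orbF => /mapP [x' Hx' Eb].
  have := allP Emp x' Hx'; rewrite /inU negb_or => /andP [_ /hasPn H].
  by have := H _ Aa'; rewrite -Eb Hab.
Qed.

Lemma in_S_weq a b u : weq a b -> in_S e a u -> in_S e b u.
Proof.
move=> H [bb [hh [Hw [nt [np [L1 [L2 L3]]]]]]]; exists bb, hh; split.
- exact: weq_trans (weq_sym H) Hw.
- exists nt, np; do 2!split=> //; exact: len_weq H L3.
Qed.

Lemma conical_weq a b v : weq a b -> conical e v a -> conical e v b.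
Proof.
move=> H C u; split=> [Hu|E].
- exact: (C u).1 (in_S_weq (weq_sym H) Hu).
- apply: (in_S_weq H); exact: (C u).2 E.
Qed.


Lemma cone_cbp v w : v \in map fst w -> cb v (cone v [::] w).2.
Proof.
move=> Hv; rewrite /cb.
have := cone_p [::] Hv; case E: (cone v [::] w).2 => [|x p] // _.
rewrite front_cons (cone_head E) eqxx /=.
by have := @cone_front v [::] w isT; rewrite /= E.
Qed.

Lemma exists_cc g v : cyc_red e g -> non_split e g -> in_supp e g v ->
  exists h, conical_conj e v g h.
Proof.
move=> Cg [_ Hcon] Hv.
case: (len_exists g) => w0 [H0 [I0 L0]].
pose F := fun w : word => (cone v [::] w).2 ++ (cone v [::] w).1.
pose gs := fun i => iter i F w0.
have Inv : forall i, [/\ irr (gs i), perm_eq (gs i) w0 &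
                         exists c, weq (gs i) (winv c ++ g ++ c)].
  elim=> [|i [Ii Pi [c Hc]]].
  - split; [exact: I0 | exact: perm_refl | ].
    by exists [::]; rewrite /= cats0; exact: weq_sym H0.
  - have S := cone_sh v [::] (gs i); rewrite /= in S.
    have Pn : perm_eq (gs i.+1) w0.
      change (perm_eq ((cone v [::] (gs i)).2 ++ (cone v [::] (gs i)).1) w0).
      rewrite perm_catC; apply: perm_trans Pi; rewrite perm_sym; exact: sh_perm S.
    have Hc' := conj_trans Hc (sh_weq S).
    have [In _] := conj_irr Cg L0 Hc' (eq_leq (perm_size Pn)).
    by split=> //; exists (c ++ (cone v [::] (gs i)).1).
have Hsupp u : in_supp e g u <-> u \in map fst w0 := in_suppP u H0 I0.
have Hmem i u : (u \in map fst (gs i)) = (u \in map fst w0).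
  by case: (Inv i) => _ Pi _; exact: (perm_mem (perm_map fst Pi) u).
have Hvi i : v \in map fst (gs i) by rewrite Hmem -Hsupp.
have Hci i : forall x y, x \in map fst (gs i) -> y \in map fst (gs i) ->
    exists s, path e x s /\ last x s = y /\ (forall z, z \in s -> z \in map fst (gs i)).
  move=> x y; rewrite !Hmem -!Hsupp => Hx Hy.
  case: (Hcon x y Hx Hy) => s [Ps [Ls Ss]]; exists s; split=> //; split=> // z /Ss.
  by rewrite Hmem Hsupp.
have Hex : exists k, cb v (gs k).
  apply: NNPP => N.
  have N' : forall i, ~~ cb v (gs i) by move=> i; apply/negP => Hi; apply: N; exists i.
  have G : forall i, i < size (cone v [::] (gs i)).2.
    elim=> [|i IH]; first exact: cone_p.
    have := grow (Hvi i) (Hci i) (N' i); change (iter i.+1 F w0) with (F (gs i)).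
    rewrite /F => H; apply: leq_trans H; exact: IH.
  have := G (size w0); have S := sh_size (cone_sh v [::] (gs (size w0))).
  rewrite /= size_cat (perm_size (let: And3 _ P _ := Inv (size w0) in P)) in S.
  move=> HH; set X := size (cone _ _ _).2 in S HH; set Y := size w0 in S HH; set Z := size _ in S; lia.
case: (ex_minnP Hex) => k Pk Hmin.
exists (gs k), k, gs; split; first exact: weq_sym H0.
split.
- move=> i Hi; case: (Inv i) => Ii _ _; split.
  + move/(conical_cb v Ii) => Pi; have := Hmin i Pi; lia.
  + have S := cone_sh v [::] (gs i); rewrite /= in S.
    have Itp := irr_sh S Ii.
    exists (cone v [::] (gs i)).1, (cone v [::] (gs i)).2; split.
    * split; first exact: sh_weq S.
      exists (size (cone v [::] (gs i)).1), (size (cone v [::] (gs i)).2).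
      split; first exact: len_ofP (weq_refl _) (irr_catl Itp).
      split; first exact: len_ofP (weq_refl _) (irr_catr Itp).
      rewrite -size_cat; exact: len_ofP (sh_weq S) Itp.
    * split; first by apply/(conical_cb v (irr_catr Itp)); exact: cone_cbp.
      split; last exact: weq_refl.
      move/(in_suppP v (weq_refl _) (irr_catl Itp)); apply/negP; exact: cone_nov.
- split; last exact: weq_refl.
  by case: (Inv k) => Ik _ _; apply/(conical_cb v Ik).
Qed.


Lemma forall_cc g v h : cyc_red e g -> conical_conj e v g h ->
  (forall u, in_supp e h u <-> in_supp e g u) /\ conical e v h.
Proof.
move=> Cg [k [gs [H0 [Hst [Ck Hh]]]]].
case: (len_exists g) => w0 [Hg0 [I0 L0]].
have Inv : forall i, i <= k -> (exists c, weq (gs i) (winv c ++ g ++ c)) /\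
    len_of e (gs i) (size w0) /\ (forall u, in_supp e (gs i) u <-> in_supp e g u).
  elim=> [|i IH] Hi.
  - split; first by exists [::]; rewrite /= cats0.
    split; first exact: len_weq (weq_sym H0) L0.
    by move=> u; split; [exact: in_supp_weq H0 | exact: in_supp_weq (weq_sym H0)].
  - have [[c Hc] [Li Si]] := IH (ltnW Hi).
    case: (Hst i Hi) => _ [t [p [[Hd [nt [np [Lt [Lp Lg]]]]] [_ [_ Hn]]]]].
    have Enn := len_of_uniq Lg Li.
    case: (len_exists t) => t' [Ht [It Lt']]; have Et := len_of_uniq Lt Lt'.
    case: (len_exists p) => p' [Hp [Ip Lp']]; have Ep := len_of_uniq Lp Lp'.
    have Hd' : weq (gs i) (t' ++ p') := weq_trans Hd (weq_cat Ht Hp).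
    have Hn' : weq (gs i.+1) (p' ++ t') := weq_trans Hn (weq_cat Hp Ht).
    have Hc' := conj_trans Hc Hd'.
    have Hs : size (p' ++ t') <= size w0 by rewrite size_cat; lia.
    have [Ipt Spt] := conj_irr Cg L0 Hc' Hs.
    case: (len_exists (gs i)) => z [Hz [Iz Lz]]; have Ez := len_of_uniq Li Lz.
    have Itp : irr (t' ++ p').
      apply: (irr_of_len (weq_trans (weq_sym Hd') Hz) Iz); rewrite size_cat; lia.
    split; first by exists (c ++ t'); exact: weq_trans Hn' Hc'.
    split; first by rewrite -Spt; exact: len_ofP Hn' Ipt.
    move=> u; rewrite -Si (in_suppP u Hn' Ipt) (in_suppP u Hd' Itp) !map_cat !mem_cat orbC.
    by [].
case: (Inv k (leqnn k)) => _ [_ Sk].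
split; last exact: conical_weq (weq_sym Hh) Ck.
move=> u; rewrite -Sk; split; [exact: in_supp_weq Hh | exact: in_supp_weq (weq_sym Hh)].
Qed.

Lemma sns_ext g h : (forall u, in_supp e h u <-> in_supp e g u) ->
  strongly_non_split e g -> strongly_non_split e h.
Proof.
move=> E [[[x Hx] Hc] Nd]; split.
- split; first by exists x; apply/E.
  move=> x0 y0 /E Hx0 /E Hy0; case: (Hc _ _ Hx0 Hy0) => s [Ps [Ls Ss]].
  exists s; split=> //; split=> // z /Ss; exact: (E z).2.
- move=> [w [Nw Hw]]; apply: Nd; exists w; split.
  + by move/E.
  + move=> u /E; exact: Hw.
Qed.

Lemma final g v (r : T -> nat) : cyc_red e g -> strongly_non_split e g -> in_supp e g v ->
  (forall w, r w < r v -> e w v) ->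
  (exists h, conical_conj e v g h) /\
  (forall h, conical_conj e v g h -> strongly_non_split e h /\ SD_conical e r h).
Proof.
move=> Cg Sg Hv Hr; split; first exact: exists_cc Cg Sg.1 Hv.
move=> h Hh; case: (forall_cc Cg Hh) => Es Ch; split; first exact: sns_ext Es Sg.
by exists v; split.
Qed.

End Raag.

Theorem lemma2p11 (T : finType) (e : rel T)
  (e_sym : symmetric e) (e_irr : irreflexive e)
  (g1 g2 : word T)
  (sns1 : strongly_non_split e g1) (sns2 : strongly_non_split e g2)
  (cr1 : cyc_red e g1) (cr2 : cyc_red e g2) :
  exists r : T -> nat, injective r /\
  exists v1 v2, in_supp e g1 v1 /\ in_supp e g2 v2 /\
    (exists h1, conical_conj e v1 g1 h1) /\
    (forall h1, conical_conj e v1 g1 h1 ->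
       strongly_non_split e h1 /\ SD_conical e r h1) /\
    (exists h2, conical_conj e v2 g2 h2) /\
    (forall h2, conical_conj e v2 g2 h2 ->
       strongly_non_split e h2 /\ SD_conical e r h2).
Proof.
case: (sns1) => [[[v1 Hv1] _] _].
have Hinj : forall (r : T -> nat), (forall x, (x == v1) = (r x == 0)) ->
   forall x, r x < r v1 -> e x v1.
  by move=> r Hr x; have := Hr v1; rewrite eqxx => /esym /eqP ->.
case: (classic (in_supp e g2 v1)) => H2.
- pose r := fun x => if x == v1 then 0 else (enum_rank x).+1.
  have Hr x : (x == v1) = (r x == 0) by rewrite /r; case: (x == v1).
  exists r; split.
  + move=> x y; rewrite /r; case: (x =P v1) => [->|_]; case: (y =P v1) => [->|_] //.
    by case=> /val_inj /enum_rank_inj.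
  + exists v1, v1; split=> //; split=> //.
    have [A1 B1] := final e_sym cr1 sns1 Hv1 (Hinj r Hr).
    have [A2 B2] := final e_sym cr2 sns2 H2 (Hinj r Hr).
    by do 3!split=> //.
- have [u [Hu Eu]] : exists u, in_supp e g2 u /\ e v1 u.
    apply: NNPP => N; case: sns2 => _; apply; exists v1; split=> // u Hu.
    by apply/negP => HE; apply: N; exists u.
  have Nu : u != v1 by apply/eqP => E; move: Eu; rewrite E e_irr.
  pose r := fun x => if x == v1 then 0 else if x == u then 1 else (enum_rank x).+2.
  have Hr x : (x == v1) = (r x == 0) by rewrite /r; case: (x == v1); case: (x == u).
  exists r; split.
  + have E0 z : r z = 0 -> z = v1.
      by rewrite /r; case: (z =P v1) => // _; case: (z =P u).
    have E1 z : r z = 1 -> z = u.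
      by rewrite /r; case: (z =P v1) => [_ //|_]; case: (z =P u).
    have E2 z : 1 < r z -> r z = (enum_rank z).+2.
      by rewrite /r; case: (z =P v1) => // _; case: (z =P u).
    move=> x y Exy; case: (ltnP 1 (r x)) => Hx.
    * have Hy : 1 < r y by rewrite -Exy.
      by move: Exy; rewrite (E2 x Hx) (E2 y Hy); case=> /val_inj /enum_rank_inj.
    * move: Hx; rewrite leq_eqVlt ltnS leqn0 => /orP [/eqP H|/eqP H].
      -- by rewrite (E1 x H) (E1 y (etrans (esym Exy) H)).
      -- by rewrite (E0 x H) (E0 y (etrans (esym Exy) H)).
  + exists v1, u; split=> //; split=> //.
    have [A1 B1] := final e_sym cr1 sns1 Hv1 (Hinj r Hr).
    have Hr2 : forall x, r x < r u -> e x u.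
      move=> x; rewrite /r eqxx (negbTE Nu).
      case: (x =P v1) => [-> _ //|_]; case: (x =P u); move=> _ H; exfalso; lia.
    have [A2 B2] := final e_sym cr2 sns2 Hu Hr2.
    by do 3!split=> //.
Qed.
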